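(* Let $G=(V\cup\{s,t\},E)$ be a directed or undirected graph with distinguished vertices $s,t$, such that the path coalitional games defined below are simple games. Then the core of (i) the Edge Path Coalitional Game (EPCG) of $G$ is non-empty if and only if there exists an edge whose removal disconnects $s$ and $t$; (ii) the Vertex Path Coalitional Game (VPCG) of $G$ is non-empty if and only if there exists a vertex whose removal disconnects $s$ and $t$; (iii) the dual $EPCG^D$ of the EPCG of $G$ is non-empty if and only if there exists an $(s,t)$ edge; (iv) the dual $VPCG^D$ of the VPCG of $G$ is non-empty if and only if there exists a vertex $x$ such that $(s,x)$ and $(x,t)$ are edges of $G$.
   Context: A coalitional game is a pair $(N,v)$ with $N$ a finite player set and $v:2^N\to\mathbb{R}_+$, $v(\varnothing)=0$. A simple game is a monotone coalitional game with $v:2^N\to\{0,1\}$, $v(\varnothing)=0$, $v(N)=1$. The EPCG of $G$ has $N=E$ and $v(S)=1$ iff the edges in $S$ contain an $s$-$t$ path, else $0$. The VPCG of $G$ has $N=V$ (the vertices other than $s,t$) and $v(S)=1$ iff the graph induced on $S\cup\{s,t\}$ contains an $s$-$t$ path, else $0$. The dual of $(N,v)$ is $(N,v^D)$ with $v^D(S)=v(N)-v(N\setminus S)$. For a payoff vector $x\in\mathbb{R}^N$ write $x(S)=\sum_{i\in S}x_i$ and $e(x,S)=x(S)-v(S)$. The core is the set of payoff vectors $x$ with $x(N)=v(N)$ and $e(x,S)\ge 0$ for all $S\subseteq N$. *)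

(* Defs.v *)
From HB Require Import structures.
From mathcomp Require Import all_boot all_order all_algebra.
Set Implicit Arguments. Unset Strict Implicit. Unset Printing Implicit Defensive.
Import Order.TTheory GRing.Theory Num.Theory.
Local Open Scope ring_scope.

Section Games.
Variables (R : realFieldType) (N : finType).

Definition game := {set N} -> R.

Definition is_coalitional_game (v : game) : Prop :=
  v set0 = 0 /\ forall S, 0 <= v S.

Definition simple_game (v : game) : Prop :=
  [/\ forall S, v S = 0 \/ v S = 1,
      v set0 = 0,
      v setT = 1 &
      forall S T : {set N}, S \subset T -> v S <= v T].

Definition dual_game (v : game) : game := fun S => v setT - v (~: S).

Definition payoff_sum (x : N -> R) (S : {set N}) : R := \sum_(i in S) x i.

Definition excess (v : game) (x : N -> R) (S : {set N}) : R :=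
  payoff_sum x S - v S.

Definition in_core (v : game) (x : N -> R) : Prop :=
  payoff_sum x setT = v setT /\ forall S : {set N}, 0 <= excess v x S.

Definition core_nonempty (v : game) : Prop := exists x : N -> R, in_core v x.
End Games.

(* A (multi)graph on the finite vertex type W with finite edge type E; edge e
   joins src e to dst e.  If [directed] is true, e may only be traversed from
   src e to dst e; otherwise in both directions. *)
Section Graphs.
Variables (W E : finType) (directed : bool) (src dst : E -> W).

Definition step (A : {set E}) : rel W :=
  fun u w => [exists e in A, ((src e == u) && (dst e == w))
                         || (~~ directed && (src e == w) && (dst e == u))].

Definition has_path (A : {set E}) (u w : W) : bool := connect (step A) u w.

Definition induced_edges (U : {set W}) : {set E} :=
  [set e | (src e \in U) && (dst e \in U)].

Definition is_edge (u w : W) : bool := step setT u w.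

Variables (s t : W).

Definition inner_vertex := {x : W | (x != s) && (x != t)}.

Variable R : realFieldType.

Definition EPCG : game R E := fun S => if has_path S s t then 1 else 0.

Definition VPCG : game R inner_vertex :=
  fun S => if has_path (induced_edges (s |: (t |: [set val x | x in S]))) s t
           then 1 else 0.
End Graphs.
Arguments VPCG {W E} directed src dst s t R _.

(* Main.v *)
Require Import Defs.
From HB Require Import structures.
From mathcomp Require Import all_boot all_order all_algebra.
From mathcomp Require Import lra.
Import Order.TTheory GRing.Theory Num.Theory.
Local Open Scope ring_scope.

Lemma sum_delta (R : realFieldType) (N : finType) (i : N) (S : {set N}) :
  payoff_sum (fun j => if j == i then (1 : R) else 0) S = if i \in S then 1 else 0.
Proof.
rewrite /payoff_sum; case: ifP => iS.
  rewrite (bigD1 i) //= eqxx big1 ?addr0 // => j /andP[_ /negbTE ->] //.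
by rewrite big1 // => j jS; case: eqP => // ji; rewrite -ji jS in iS.
Qed.

Lemma core_simple (R : realFieldType) (N : finType) (v : game R N) :
  simple_game v -> (core_nonempty v <-> exists i, v (~: [set i]) = 0).
Proof.
case=> v01 v0 v1 vmon; split.
- case=> x [xN xS].
  case: (boolP [exists i, v (~: [set i]) == 0]) => [/existsP [i /eqP]|/existsPn H];
    first by eauto.
  have x0 : forall i, x i = 0.
    move=> i.
    have h1 := xS [set i]; rewrite /excess /payoff_sum big_set1 in h1.
    have h2 := xS (~: [set i]); rewrite /excess in h2.
    have vi1 : v (~: [set i]) = 1.
      by case: (v01 (~: [set i])) => // e; move: (H i); rewrite e eqxx.
    have vi0 : 0 <= v [set i] by case: (v01 [set i]) => ->; rewrite ?ler01.
    have hs : payoff_sum x setT = x i + payoff_sum x (~: [set i]).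
      rewrite /payoff_sum (bigD1 i) //=; congr (_ + _).
      apply: eq_bigl => j; rewrite !inE.
      by [].
    rewrite vi1 in h2; rewrite xN v1 in hs.
    apply/eqP; rewrite eq_le; apply/andP; split; last by lra.
    by lra.
  move: xN; rewrite v1 /payoff_sum big1 => [/eqP|j _]; last exact: x0.
  by rewrite eq_sym oner_eq0.
- case=> i vi; exists (fun j => if j == i then 1 else 0); split.
    by rewrite sum_delta inE v1.
  move=> S; rewrite /excess sum_delta; case: ifP => iS.
    by rewrite subr_ge0 -v1; apply: vmon; apply: subsetT.
  rewrite sub0r oppr_ge0 -vi; apply: vmon; apply/subsetP => j jS.
  by rewrite !inE; apply/eqP => ji; rewrite -ji jS in iS.
Qed.

Lemma dual_simple (R : realFieldType) (N : finType) (v : game R N) :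
  simple_game v -> simple_game (dual_game v).
Proof.
case=> v01 v0 v1 vmon; split; rewrite /dual_game.
- by move=> S; rewrite v1; case: (v01 (~: S)) => ->; [right; rewrite subr0|left; rewrite subrr].
- by rewrite setC0 v1 subrr.
- by rewrite setCT v0 subr0.
- by move=> S T ST; rewrite lerB // vmon // setCS.
Qed.

Lemma ite10 (R : realFieldType) (b : bool) :
  (((if b then 1 else 0 : R) = 0) <-> ~~ b) /\ (((if b then 1 else 0 : R) = 1) <-> b).
Proof.
case: b; split; split => //.
  by move/eqP; rewrite oner_eq0.
by move/eqP; rewrite eq_sym oner_eq0.
Qed.

Lemma connect_inv (T : finType) (e : rel T) (P : T -> Prop) x y :
  (forall u w, P u -> e u w -> P w) -> P x -> connect e x y -> P y.
Proof.
move=> H Px /connectP [p pth ->].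
elim: p x Px pth => [|z p IH] x Px //= /andP[exz pth].
exact: IH (H _ _ Px exz) pth.
Qed.

Section G.
Variables (W E : finType) (directed : bool) (src dst : E -> W).

Lemma step_sub (A B : {set E}) (u w : W) : A \subset B -> step directed src dst A u w ->
  step directed src dst B u w.
Proof.
move=> AB /existsP[e /andP[eA H]]; apply/existsP; exists e.
by rewrite (subsetP AB).
Qed.

Lemma step1 (e : E) (u w : W) : step directed src dst [set e] u w =
  ((src e == u) && (dst e == w)) || (~~ directed && (src e == w) && (dst e == u)).
Proof.
apply/existsP/idP => [[e' /andP[/set1P -> H]] // | H].
by exists e; rewrite inE eqxx.
Qed.

Lemma step_ind (U : {set W}) (u w : W) : step directed src dst (induced_edges src dst U) u w ->
  (u \in U) && (w \in U).
Proof.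
case/existsP => e /andP[]; rewrite inE => /andP[sU dU].
by case/orP => [/andP[/eqP<- /eqP<-]|/andP[/andP[_ /eqP<-] /eqP<-]]; rewrite ?sU ?dU.
Qed.

Lemma step_res (B : {set E}) (V : {set W}) (u w : W) : step directed src dst B u w -> u \in V -> w \in V ->
  step directed src dst (induced_edges src dst V) u w.
Proof.
case/existsP=> e /andP[_ H] uV wV; apply/existsP; exists e; rewrite H andbT inE.
by case/orP: H => [/andP[/eqP-> /eqP->]|/andP[/andP[_ /eqP->] /eqP->]];
  rewrite ?uV ?wV.
Qed.
End G.
Arguments step_sub {W E directed src dst A B u w}.
Arguments step1 {W E directed src dst e u w}.
Arguments step_ind {W E directed src dst U u w}.
Arguments step_res {W E directed src dst B V u w}.

Theorem proposition1 (R : realFieldType) (W E : finType) (directed : bool)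
    (src dst : E -> W) (s t : W) :
  (* (i) *)
  (simple_game (EPCG directed src dst s t R) ->
    (core_nonempty (EPCG directed src dst s t R) <->
     exists e : E, ~~ has_path directed src dst (~: [set e]) s t)) /\
  (* (ii) *)
  (simple_game (VPCG directed src dst s t R) ->
    (core_nonempty (VPCG directed src dst s t R) <->
     exists x : inner_vertex s t,
       ~~ has_path directed src dst (induced_edges src dst (~: [set val x])) s t)) /\
  (* (iii) *)
  (simple_game (EPCG directed src dst s t R) ->
    (core_nonempty (dual_game (EPCG directed src dst s t R)) <->
     is_edge directed src dst s t)) /\
  (* (iv) *)
  (simple_game (VPCG directed src dst s t R) ->
    (core_nonempty (dual_game (VPCG directed src dst s t R)) <->
     exists x : inner_vertex s t,
       is_edge directed src dst s (val x) && is_edge directed src dst (val x) t)).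
Proof.
split; [|split; [|split]].
- move=> sg; rewrite core_simple //; split=> [[e he]|[e he]]; exists e;
    rewrite /EPCG in he *;
    [apply (proj1 (proj1 (ite10 R _))) | apply (proj2 (proj1 (ite10 R _)))]; exact he.
- move=> sg; rewrite core_simple //.
  have setE : forall x : inner_vertex s t,
      s |: (t |: [set val y | y in ~: [set x]]) = ~: [set val x].
    move=> x; apply/setP => w; rewrite !inE.
    have [xs xt] : (val x != s) /\ (val x != t) by case/andP: (valP x).
    case: (eqVneq w s) => [->|ws] /=; first by rewrite eq_sym.
    case: (eqVneq w t) => [->|wt] /=; first by rewrite eq_sym.
    apply/imsetP/idP => [[y]|wx].
      by rewrite !inE => yx ->; apply: contra yx => /eqP/val_inj ->.
    have wP : (w != s) && (w != t) by rewrite ws wt.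
    exists (exist _ w wP) => //; rewrite !inE; apply: contra wx => /eqP <-.
    by [].
  split=> [[x he]|[x he]]; exists x;
    rewrite /VPCG setE in he *;
    [apply (proj1 (proj1 (ite10 R _))) | apply (proj2 (proj1 (ite10 R _)))]; exact he.
- move=> sg; rewrite core_simple; last exact: dual_simple.
  case: sg => _ v0 v1 _.
  have st : s != t.
    apply/eqP => est; move: v0; rewrite /EPCG /has_path est connect0.
    by move/eqP; rewrite oner_eq0.
  rewrite /dual_game; split.
  + case=> e; rewrite setCK.
    move/eqP; rewrite subr_eq0; move/eqP.
    rewrite /EPCG; case: ifP => hT; last first.
      by move=> h; move: v1; rewrite /EPCG hT => /eqP; rewrite eq_sym oner_eq0.
    case: ifP => [h1 _|_ /eqP]; last by rewrite oner_eq0.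
    have inv : forall w, connect (step directed src dst [set e]) s w ->
        w = s \/ step directed src dst [set e] s w.
      move=> w; apply: (@connect_inv _ _ (fun w => w = s \/ step directed src dst [set e] s w)); last by left.
      move=> u x [->|hu]; first by right.
      move=> hx; move: hu hx; rewrite !step1.
      by case/orP => [/andP[/eqP h1' /eqP h2]|/andP[/andP[_ /eqP h1'] /eqP h2]];
        case/orP => [/andP[/eqP h3 /eqP h4]|/andP[/andP[_ /eqP h3] /eqP h4]];
        subst; auto.
    case: (inv _ h1) => [ets|h]; first by rewrite ets eqxx in st.
    by rewrite /is_edge; apply: step_sub h; apply: subsetT.
  + rewrite /is_edge /step; case/existsP => e /andP[_ H]; exists e; rewrite setCK.
    rewrite v1 /EPCG; case: ifP => [_|/negbT/negP []]; first by rewrite subrr.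
    by apply: connect1; apply/existsP; exists e; rewrite !inE eqxx H.
- move=> sg; rewrite core_simple; last exact: dual_simple.
  case: sg => _ v0 v1 _.
  move: v0; rewrite /VPCG imset0 setU0; case: ifP => [_ /eqP|/negbT H0 _];
    first by rewrite oner_eq0.
  move: v1; rewrite /VPCG /dual_game => ->.
  have st : s != t.
    by apply/eqP => est; move: H0; rewrite /has_path est connect0.
  split=> [[x]|[x /andP[e1 e2]]]; [move/eqP|exists x; apply/eqP];
    rewrite setCK imset_set1 subr_eq0 eq_sym; last first.
    case: ifP => // /negbT/negP []; rewrite /has_path; apply: (connect_trans (y := val x)).
      by apply: connect1; apply: step_res e1 _ _; rewrite !inE eqxx ?orbT.
    by apply: connect1; apply: step_res e2 _ _; rewrite !inE eqxx ?orbT.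
  case: ifP => [hp _|_]; last by rewrite eq_sym oner_eq0.
  exists x.
  have [xs xt] : (val x != s) /\ (val x != t) by case/andP: (valP x).
  pose P w := w = s \/ (w = (val x) /\ is_edge directed src dst s (val x)) \/
              (is_edge directed src dst s (val x) /\ is_edge directed src dst (val x) t).
  have : P t.
    apply: connect_inv hp; last by left.
    move=> u w Pu huw.
    have /andP[uU wU] := step_ind huw.
    have euw : is_edge directed src dst u w by apply: step_sub huw; apply: subsetT.
    move: wU; rewrite !inE => /orP[/eqP->|/orP[/eqP wt|/eqP wX]]; first by left.
    + case: Pu => [us|[[uX sX]|[sX Xt]]]; try by right; right.
      * case/negP: H0; apply: connect1; rewrite -us -wt.
        by apply: step_res huw _ _; rewrite !inE eqxx ?orbT.
      * by right; right; split => //; rewrite uX wt in euw.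
    + case: Pu => [us|[[uX sX]|[sX Xt]]]; try by right; right.
      * by right; left; split => //; rewrite us wX in euw.
      * by right; left.
  case=> [ts|[[tX _]|[-> ->]]] //.
    by exfalso; move/eqP: st; apply; exact: esym ts.
  by exfalso; move/eqP: xt; apply; exact: esym tX.
Qed.
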